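(* Let $k$ be an algebraically closed field of characteristic $p>2$, let $X$ be the smooth projective curve over $k$ with affine equation $y^2=x^p-x$, of genus $g=(p-1)/2$, and let $G=\operatorname{Aut}_k(X)$, described below. Let $\theta:\operatorname{SL}_2(\mathbf{F}_p)\to G$ send $\sigma$ to the class of $(\sigma,1)$, and let $H=\operatorname{im}\theta$. Let $V$ be the $k[H]$-module $\operatorname{Sym}^{g-1}(k^2)$ described below. Then the $k$-linear map $$\varphi: \operatorname{res}_H\big(H^0(X,\Omega^1_{X/k})\big)\to V,\qquad \frac{x^i\,dx}{y}\mapsto u^iv^{g-i-1}\quad (i=0,\dots,g-1)$$ is an isomorphism of $k[H]$-modules.
   Context: Let $\widetilde G\subseteq \operatorname{GL}_2(\mathbf{F}_p)\times \mathbf{F}_{p^2}^\times$ be the subgroup of pairs $(\sigma,u_\sigma)$ with $\det\sigma=u_\sigma^2$; $\mathbf{F}_p^\times$ acts on $\widetilde G$ by $\lambda(\sigma,u_\sigma)=(\lambda\sigma,\lambda^{(p+1)/2}u_\sigma)$, and $G=\mathbf{F}_p^\times\backslash\widetilde G$, which equals $\operatorname{Aut}_k(X)$. The class of $(\sigma,u_\sigma)$ with $\sigma=\begin{pmatrix}a&b\\c&d\end{pmatrix}$ acts on affine coordinates of $X$ by $(x,y)\mapsto\left(\frac{ax+b}{cx+d},\,u_\sigma\frac{y}{(cx+d)^{(p+1)/2}}\right)$, and $G$ acts on $H^0(X,\Omega^1_{X/k})$ functorially (by pullback/transport of forms). The elements $x^i\,dx/y$, $i=0,\dots,g-1$, form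 a $k$-basis of $H^0(X,\Omega^1_{X/k})$. Identify $\operatorname{Sym}^{g-1}(k^2)$ with the homogeneous polynomials of degree $g-1$ in $k[u,v]$, with $\begin{pmatrix}a&b\\c&d\end{pmatrix}\in\operatorname{SL}_2(\mathbf{F}_p)$ acting by substituting $u\mapsto au+bv$, $v\mapsto cu+dv$. The kernel of $\theta$ ($\{I\}$ if $p\equiv1\bmod 4$, $\{\pm I\}$ if $p\equiv 3\bmod 4$) acts trivially on this space, so $h=\theta(\sigma)\in H$ acting as $\sigma$ gives a well-defined $k[H]$-module $V$. *)

(* Defs.v *)
From HB Require Import structures.
From mathcomp Require Import all_boot all_order all_algebra all_field.
From mathcomp Require Import mpoly fraction.
Set Implicit Arguments. Unset Strict Implicit. Unset Printing Implicit Defensive.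
Import Order.TTheory GRing.Theory.
Local Open Scope ring_scope.

(* F := k(x) = {fraction {poly k}};  an element (a,b) of
   K := F * F stands for a + b*y in k(X) = F(y) (y^2 = x^p - x);  a
   meromorphic differential  w dx  (w in K) is represented by w. *)
Section Curve.
Variables (k : fieldType) (p : nat).

Definition genus : nat := (p.-1)./2.

Local Notation F := {fraction {poly k}}.
Local Notation "x %:F" := (@FracField.tofrac _ x).
Local Notation tofrac := (@FracField.tofrac _).
Local Notation K := (F * F)%type.

Definition xF : F := ('X)%:F.
Definition fF : F := xF ^+ p - xF.

Definition addK (u v : K) : K := (u.1 + v.1, u.2 + v.2).
Definition mulK (u v : K) : K :=
  (u.1 * v.1 + u.2 * v.2 * fF, u.1 * v.2 + u.2 * v.1).
Definition invK (u : K) : K :=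
  let n := u.1 ^+ 2 - u.2 ^+ 2 * fF in (u.1 / n, - u.2 / n).
Definition yK : K := (0, 1).

Definition derF (q : F) : F :=
  let r := repr q in
  ((\n_r)^`() * \d_r - \n_r * (\d_r)^`())%:F / ((\d_r) ^+ 2)%:F.

(* sigma in SL_2(F_p), entries embedded in k (char k = p) *)
Definition ent (s : 'M['F_p]_2) (i j : 'I_2) : k := (nat_of_ord (s i j))%:R.

Definition mob (s : 'M['F_p]_2) : F :=
  (ent s 0 0 *: 'X + (ent s 0 1)%:P)%:F / (ent s 1 0 *: 'X + (ent s 1 1)%:P)%:F.
Definition evalF (s : 'M['F_p]_2) (P : {poly k}) : F := (map_poly (fun a : k => (a%:P)%:F) P).[mob s].
Definition subF (s : 'M['F_p]_2) (q : F) : F :=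
  evalF s (\n_(repr q)) / evalF s (\d_(repr q)).

(* the automorphism of k(X) (pull-back of functions) attached to the class
   of (sigma, u_sigma) with u_sigma = 1:
   x |-> (a x + b)/(c x + d),  y |-> 1 * y / (c x + d)^((p+1)/2) *)
Definition sigma_y (s : 'M['F_p]_2) : K :=
  (0, ((ent s 1 0 *: 'X + (ent s 1 1)%:P)%:F ^+ (p.+1)./2)^-1).
Definition actK (s : 'M['F_p]_2) (w : K) : K :=
  addK (subF s w.1, 0) (mulK (subF s w.2, 0) (sigma_y s)).

(* pull-back of differentials:  sigma^*(w dx) = sigma(w) d(sigma x) *)
Definition pullback (s : 'M['F_p]_2) (w : K) : K :=
  mulK (actK s w) (derF (subF s xF), 0).

Definition omega (i : nat) : K := mulK (xF ^+ i, 0) (invK yK).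

Definition omega_of (c : 'rV[k]_genus) : K :=
  (\sum_(i < genus) ((c 0 i)%:P)%:F * (omega i).1,
   \sum_(i < genus) ((c 0 i)%:P)%:F * (omega i).2).

(* Sym^{g-1}(k^2) = homogeneous polynomials of degree g-1 in k[u,v];
   u = 'X_0, v = 'X_1 *)
Definition sym_of (c : 'rV[k]_genus) : {mpoly k[2]} :=
  \sum_(i < genus) c 0 i *: ('X_0 ^+ i * 'X_1 ^+ (genus.-1 - i)).

Definition actV (s : 'M['F_p]_2) (P : {mpoly k[2]}) : {mpoly k[2]} :=
  P \mPo [tuple ent s 0 0 *: 'X_0 + ent s 0 1 *: 'X_1;
                ent s 1 0 *: 'X_0 + ent s 1 1 *: 'X_1].

End Curve.

(* Main.v *)
Require Import Defs.
From HB Require Import structures.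
From mathcomp Require Import all_boot all_order all_algebra all_field.
From mathcomp Require Import mpoly fraction generic_quotient.
From mathcomp Require Import ring zify.
Import GRing.Theory.
Local Open Scope ring_scope.
Local Open Scope quotient_scope.

Section Frac.
Variable R : idomainType.
Local Notation F := {fraction R}.
Local Notation tf := (@FracField.tofrac R).
Lemma fracE (q : F) : q = tf (\n_(repr q)) / tf (\d_(repr q)).
Proof.
rewrite -{1}[q]reprK; set r := repr q.
unlock FracField.tofrac.
set d := \pi_F (Ratio \d_r 1).
have -> : d^-1 = \pi_F (FracField.invf (Ratio \d_r 1)) by exact: (esym (FracField.pi_inv _)).
set n := \pi_F (Ratio \n_r 1).
have -> : n * \pi_F (FracField.invf (Ratio \d_r 1)) = \pi_F (FracField.mulf (Ratio \n_r 1) (FracField.invf (Ratio \d_r 1))) by exact: (esym (FracField.pi_mul _ _)).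
apply/eqmodP; rewrite /= FracField.equivfE /=.
have hd := denom_ratioP r.
rewrite /FracField.invf /FracField.mulf /=.
have e1 x : \n_(Ratio x (1:R)) = x := numer_Ratio _ (oner_neq0 _).
have e2 x : \d_(Ratio x (1:R)) = 1 := denom_Ratio _ (oner_neq0 _).
rewrite !e1 !e2 (numer_Ratio _ hd) (denom_Ratio _ hd) !mul1r mulr1.
rewrite numer_Ratio // denom_Ratio //.
by rewrite mulrC.
Qed.

Lemma den_neq0 (q : F) : \d_(repr q) != 0.
Proof. exact: denom_ratioP. Qed.

Lemma frac_eq (n d n' d' : R) : d != 0 -> d' != 0 ->
  tf n / tf d = tf n' / tf d' -> n * d' = n' * d.
Proof.
move=> hd hd' /eqP; rewrite eqr_div ?tofrac_eq0 // -!rmorphM /=.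
by rewrite tofrac_eq => /eqP.
Qed.
End Frac.

Section Der.
Variable k : fieldType.
Local Notation F := {fraction {poly k}}.
Local Notation tf := (@FracField.tofrac {poly k}).

Lemma derF_frac (n d : {poly k}) : d != 0 ->
  derF (tf n / tf d) = tf (n^`() * d - n * d^`()) / tf (d ^+ 2).
Proof.
move=> hd; rewrite /derF.
set q := tf n / tf d.
have hq := @fracE _ q; have hd0 := @den_neq0 _ q.
move: (repr q) hq hd0 => r hq hd0.
set n0 := \n_r in hq *; set d0 := \d_r in hq hd0 *.
have E1 : n0 * d = n * d0 by apply: frac_eq => //; rewrite -hq.
have E2 := congr1 (@deriv _) E1; rewrite !derivM in E2.
apply/eqP; rewrite eqr_div ?tofrac_eq0 ?expf_neq0 // -!rmorphM /= tofrac_eq.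
apply/eqP.
have -> : (n0^`() * d0 - n0 * d0^`()) * d ^+ 2 =
   d0 * d * (n0^`() * d + n0 * d^`()) - d0 * d^`() * (n0 * d) - d * d0^`() * (n0 * d) by ring.
rewrite E2 E1; ring.
Qed.
End Der.
Lemma det2 (R : comRingType) (A : 'M[R]_2) : \det A = A 0 0 * A 1 1 - A 0 1 * A 1 0.
Proof.
rewrite (expand_det_row _ 0) !big_ord_recl big_ord0 addr0 /cofactor !det_mx11.
rewrite /= expr0 expr1 mul1r mulN1r mulrN !mxE.
have e1 : lift 0 (0 : 'I_1) = 1 :> 'I_2 by apply: val_inj.
have e2 : lift ord0 (0 : 'I_1) = 1 :> 'I_2 by apply: val_inj.
have e3 : lift (lift ord0 ord0) (0 : 'I_1) = 0 :> 'I_2 by apply: val_inj.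
have e4 : lift ord0 ord0 = 1 :> 'I_2 by apply: val_inj.
rewrite ?e1 ?e2 ?e3 ?e4.
have e5 : lift 1 (0 : 'I_1) = 0 :> 'I_2 by apply: val_inj.
by rewrite e5.
Qed.

Section Ent.
Variables (k : fieldType) (p : nat).
Hypothesis pp : prime p.
Hypothesis chp : p \in [pchar k].
Lemma ent_det (s : 'M['F_p]_2) : \det s = 1 ->
  @ent k p s 0 0 * @ent k p s 1 1 - @ent k p s 0 1 * @ent k p s 1 0 = 1 :> k.
Proof.
rewrite det2 => h.
have p1 : (1 < p)%N by apply: prime_gt1.
pose a := nat_of_ord (s 0 0); pose b := nat_of_ord (s 0 1).
pose c := nat_of_ord (s 1 0); pose d := nat_of_ord (s 1 1).
pose A := (a * d)%N; pose B := (b * c)%N.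
have h1 : (A%:R : 'F_p) = (B + 1)%:R.
  have nz (x : 'F_p) : (nat_of_ord x)%:R = x by exact: natr_Zp.
  rewrite /A /B natrD !natrM !nz -h; ring.
have h2 : (A %% p = (B + 1) %% p)%N by rewrite -!val_Fp_nat // h1.
have : (A%:R : k) = (B + 1)%:R by rewrite -(GRing.natr_mod_pchar chp) h2 (GRing.natr_mod_pchar chp).
rewrite /ent /A /B !natrM natrD => ->; ring.
Qed.
End Ent.

Section Eval.
Variables (k : closedFieldType) (p : nat).
Hypothesis pp : prime p.
Hypothesis chp : p \in [pchar k].
Variable s : 'M['F_p]_2.
Hypothesis hs : \det s = 1.
Local Notation F := {fraction {poly k}}.
Local Notation tf := (@FracField.tofrac {poly k}).
Local Notation a := (@ent k p s 0 0).
Local Notation b := (@ent k p s 0 1).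
Local Notation c := (@ent k p s 1 0).
Local Notation d := (@ent k p s 1 1).
Definition cF : {rmorphism k -> F} := tf \o polyC.
Definition Mp : {poly k} := a *: 'X + b%:P.
Definition Lp : {poly k} := c *: 'X + d%:P.
Definition ev : {rmorphism {poly k} -> F} := horner_eval (@mob k p s) \o map_poly cF.

Lemma evalFE P : evalF s P = ev P.
Proof. by []. Qed.

Lemma mobE : @mob k p s = tf Mp / tf Lp.
Proof. by []. Qed.

Lemma detk : a * d - b * c = 1.
Proof. exact: ent_det. Qed.

Lemma coefMp0 : Mp`_0 = b.
Proof. by rewrite /Mp coefD coefZ coefX coefC /= mulr0 add0r. Qed.
Lemma coefMp1 : Mp`_1 = a.
Proof. by rewrite /Mp coefD coefZ coefX coefC /= mulr1 addr0. Qed.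
Lemma coefLp0 : Lp`_0 = d.
Proof. by rewrite /Lp coefD coefZ coefX coefC /= mulr0 add0r. Qed.
Lemma coefLp1 : Lp`_1 = c.
Proof. by rewrite /Lp coefD coefZ coefX coefC /= mulr1 addr0. Qed.

Lemma Lp_neq0 : Lp != 0.
Proof.
apply/negP => /eqP h.
have hc : c = 0 by rewrite -coefLp1 h coef0.
have hd : d = 0 by rewrite -coefLp0 h coef0.
have := detk; rewrite hc hd !mulr0 subr0 => /eqP; by rewrite eq_sym oner_eq0.
Qed.

Lemma evX : ev 'X = @mob k p s.
Proof. by rewrite /= horner_evalE map_polyX hornerX. Qed.
Lemma evC x : ev x%:P = tf x%:P.
Proof. by rewrite /= horner_evalE map_polyC hornerC. Qed.

Lemma ev_neq0 P : P != 0 -> ev P != 0.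
Proof.
move=> hP; have [r hr] := closed_field_poly_normal P.
rewrite hr -mul_polyC (rmorphM ev) mulf_neq0 //.
  by rewrite evC tofrac_eq0 polyC_eq0 lead_coef_eq0.
rewrite (rmorph_prod ev) prodf_seq_neq0; apply/allP => z _.
rewrite (rmorphB ev) evX evC.
rewrite subr_eq0; apply/negP => /eqP hz.
have : tf Mp = tf (z%:P * Lp).
  by rewrite tofracM -hz mobE mulfVK // tofrac_eq0 Lp_neq0.
move/eqP; rewrite tofrac_eq => /eqP hM.
have ha : a = z * c by rewrite -coefMp1 hM coefCM coefLp1.
have hb : b = z * d by rewrite -coefMp0 hM coefCM coefLp0.
have := detk; rewrite ha hb => /eqP.
by rewrite mulrAC [z * d * c]mulrAC subrr eq_sym oner_eq0.
Qed.

Lemma subF_frac n dd : dd != 0 -> subF s (tf n / tf dd) = ev n / ev dd.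
Proof.
move=> hdd; rewrite /subF !evalFE.
set q := tf n / tf dd.
have hq := @fracE _ q; have hd0 := @den_neq0 _ q.
move: (repr q) hq hd0 => r hq hd0.
have E1 : \n_r * dd = n * \d_r by apply: frac_eq => //; rewrite -hq.
apply/eqP; rewrite eqr_div ?ev_neq0 // -!(rmorphM ev) E1.
by [].
Qed.

Lemma subF_x : subF s (xF k) = @mob k p s.
Proof.
have -> : xF k = tf 'X / tf 1 by rewrite tofrac1 divr1.
by rewrite subF_frac ?oner_neq0 // evX rmorph1 divr1.
Qed.

Lemma subF_0 : subF s (0 : F) = 0.
Proof.
have -> : (0 : F) = tf 0 / tf 1 by rewrite rmorph0 mul0r.
by rewrite subF_frac ?oner_neq0 // (rmorph0 ev) tofrac0 !mul0r.
Qed.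

Lemma derMp : Mp^`() = a%:P.
Proof. by rewrite /Mp derivD derivZ derivX derivC addr0 alg_polyC. Qed.
Lemma derLp : Lp^`() = c%:P.
Proof. by rewrite /Lp derivD derivZ derivX derivC addr0 alg_polyC. Qed.

Lemma derF_mob : derF (subF s (xF k)) = (tf Lp ^+ 2)^-1.
Proof.
rewrite subF_x mobE derF_frac ?Lp_neq0 // derMp derLp.
have -> : a%:P * Lp - Mp * c%:P = 1.
  rewrite /Lp /Mp -!mul_polyC -polyC1 -detk polyCB !polyCM; ring.
by rewrite tofrac1 div1r tofracXn.
Qed.

Lemma fFE : fF k p = tf ('X^p - 'X).
Proof. by rewrite /fF /xF tofracB tofracXn. Qed.

Lemma natXp (n : nat) : (n%:R : k) ^+ p = n%:R.
Proof. by rewrite -(pFrobenius_autE chp) pFrobenius_aut_nat. Qed.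

Lemma frob_lin (u v : k) : (u ^+ p = u) -> (v ^+ p = v) ->
  (u *: 'X + v%:P) ^+ p = u *: 'X^p + v%:P.
Proof.
move=> hu hv.
have chP : p \in [pchar {poly k}] by rewrite pchar_poly.
rewrite -(pFrobenius_autE chP) pFrobenius_autD_comm; last exact: mulrC.
by rewrite !pFrobenius_autE exprZn hu -rmorphXn /= hv.
Qed.

Lemma field_id1 (K : fieldType) (Mq Lq M L : K) : L != 0 -> Lq != 0 ->
  Mq / Lq - M / L = (Mq * L - M * Lq) / (L * Lq).
Proof. by move=> h1 h2; field; rewrite h1 h2. Qed.

Lemma field_id3 (K : fieldType) (E f A B C : K) : A != 0 -> B != 0 -> C != 0 -> f != 0 ->
  E / (f / (A * B * C)) / A / B = E * C / f.
Proof. by move=> h1 h2 h3 h4; field; rewrite h1 h2 h3 h4. Qed.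

Lemma ring_id2 (R : comRingType) (A B C D U V : R) :
  (A*V + B)*(C*U + D) - (A*U+B)*(C*V+D) = (A*D - B*C)*(V - U).
Proof. ring. Qed.

Lemma frob_id : Mp^+p * Lp - Mp * Lp^+p = 'X^p - 'X.
Proof.
rewrite /Mp /Lp !frob_lin ?natXp //.
rewrite -[RHS]mul1r -polyC1 -detk -!mul_polyC polyCB !polyCM.
by rewrite (ring_id2 _ _ _ _ _ 'X 'X^p).
Qed.

Lemma ev_f : ev ('X^p - 'X) = tf ('X^p - 'X) / tf Lp ^+ p.+1.
Proof.
rewrite (rmorphB ev) (rmorphXn ev) evX mobE expr_div_n -frob_id tofracB !tofracM !tofracXn.
have hL : tf Lp != 0 by rewrite tofrac_eq0 Lp_neq0.
rewrite exprS.
move: (tf Lp) (tf Mp) hL => L M hL.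
have hLp : L ^+ p != 0 := expf_neq0 _ hL.
exact: (@field_id1 {fraction {poly k}} _ _ _ _ hL hLp).
Qed.

Hypothesis p2 : (2 < p)%N.
Local Notation g := (genus p).

Lemma g_facts : [/\ (0 < g)%N, (p.+1)./2 = g.+1 & p.+1 = (g.+1 + 2 + g.-1)%N].
Proof.
have [p2'|op] := even_prime pp; first by move: p2; rewrite p2'.
have e := odd_double_half p; rewrite op in e.
have hg : g = p./2 by rewrite /genus -{1}e /= add0n doubleK.
rewrite hg; set h := p./2 in e *; clearbody h.
have h0 : (0 < h)%N by move: p2; rewrite -e; case: (h).
split => //.
  by rewrite -e /= add0n doubleK.
rewrite -e -!addnn; move: h0; case: (h) => // h' _ /=; lia.
Qed.

Definition Pc (cc : 'rV[k]_g) : {poly k} := \sum_(i < g) (cc 0 i)%:P * 'X^i.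
Definition Qc (cc : 'rV[k]_g) : {poly k} :=
  \sum_(i < g) (cc 0 i)%:P * (Mp ^+ i * Lp ^+ (g.-1 - i)).

Lemma fF_neq0 : fF k p != 0.
Proof.
rewrite fFE tofrac_eq0; apply/eqP => /(congr1 (fun q : {poly k} => q`_p)).
rewrite coefB coefXn coefX eqxx /= (_ : (p == 1)%N = false); last first.
  by apply/negbTE; rewrite neq_ltn prime_gt1 ?orbT.
by rewrite subr0 coef0 => /eqP; rewrite oner_eq0.
Qed.

Lemma omega1 i : (omega k p i).1 = 0.
Proof. by rewrite /omega /mulK /invK /yK /= !mul0r mulr0 add0r. Qed.

Lemma omega2 i : (omega k p i).2 = xF k ^+ i / fF k p.
Proof.
rewrite /omega /mulK /invK /yK /= !mul0r addr0 expr0n /= expr1n mul1r sub0r.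
by rewrite invrN mulrN mulNr opprK mul1r.
Qed.

Lemma omega_of1 cc : (@omega_of k p cc).1 = 0.
Proof. by rewrite /omega_of /=; apply: big1 => i _; rewrite !mul0r mulr0 add0r mulr0. Qed.

Lemma omega_of2 cc : (@omega_of k p cc).2 = tf (Pc cc) / fF k p.
Proof.
rewrite /omega_of /= /Pc rmorph_sum /= mulr_suml; apply: eq_bigr => i _.
have := omega2 i; rewrite /omega /= => ->.
by rewrite tofracM tofracXn mulrA.
Qed.

Lemma ev_Pc cc : ev (Pc cc) * tf Lp ^+ g.-1 = tf (Qc cc).
Proof.
rewrite /Pc /Qc (rmorph_sum ev) rmorph_sum mulr_suml; apply: eq_bigr => i _.
rewrite (rmorphM ev) (rmorphXn ev) evX evC mobE !rmorphM !rmorphXn -mulrA; congr (_ * _).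
have hi : (i <= g.-1)%N by rewrite -ltnS prednK ?ltn_ord //; case: g_facts.
rewrite -{1}(subnKC hi) exprD expr_div_n mulrA divfK //.
by rewrite expf_neq0 // tofrac_eq0 Lp_neq0.
Qed.

Lemma pull_main cc cc' : Pc cc' = Qc cc -> pullback s (omega_of cc) = omega_of cc'.
Proof.
move=> hPQ.
have w1 := omega_of1 cc; have w2 := omega_of2 cc.
have w1' := omega_of1 cc'; have w2' := omega_of2 cc'.
rewrite /pullback /actK /addK /mulK.
move: (omega_of cc) (omega_of cc') w1 w2 w1' w2' => [u1 u2] [v1 v2] /= -> -> -> ->.
rewrite derF_mob subF_0 fFE subF_frac; last by have := fF_neq0; rewrite fFE tofrac_eq0.
have [g0 hu hp1] := g_facts.
rewrite -[tofrac (_ *: 'X + _)]/(tf Lp) -[uphalf p]/((p.+1)./2) hu.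
rewrite ?(mul0r, mulr0, add0r, addr0); congr (_, _).
rewrite ev_f hPQ -ev_Pc hp1 !exprD.
have hL : tf Lp != 0 by rewrite tofrac_eq0 Lp_neq0.
have hf : tf ('X^p - 'X) != 0 by rewrite -fFE fF_neq0.
move: (tf Lp) (tf ('X^p - 'X)) (ev (Pc cc)) hL hf => L f E hL hf.
exact: (@field_id3 {fraction {poly k}} E f _ _ _ (expf_neq0 _ hL) (expf_neq0 _ hL) (expf_neq0 _ hL) hf).
Qed.
End Eval.

Lemma ord2P (l : 'I_2) : l = ord0 \/ l = ord_max.
Proof. case: l => [[|[|l]] hl] //; [left|right]; by apply: val_inj. Qed.

Section MP.
Variable k : fieldType.
Definition mon (i j : nat) : 'X_{1..2} := (U_(ord0 : 'I_2) *+ i + U_(ord_max : 'I_2) *+ j)%MM.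

Lemma mon0 i j : mon i j ord0 = i.
Proof. by rewrite /mon mnmDE !mulmnE !mnm1E /= mul1n mul0n addn0. Qed.
Lemma mon1 i j : mon i j ord_max = j.
Proof. by rewrite /mon mnmDE !mulmnE !mnm1E /= mul1n mul0n. Qed.

Lemma mon_eq i j m : (mon i j == m) = (i == m ord0) && (j == m ord_max).
Proof.
apply/eqP/andP => [<-|[/eqP hi /eqP hj]]; first by rewrite mon0 mon1.
apply/mnmP => l; have [->|->] := ord2P l; by rewrite ?mon0 ?mon1.
Qed.

Lemma XXmon i j : 'X_0 ^+ i * 'X_1 ^+ j = 'X_[mon i j] :> {mpoly k[2]}.
Proof. by rewrite !mpolyXn -mpolyXD. Qed.

Lemma mdeg_mon i j : mdeg (mon i j) = (i + j)%N.
Proof. by rewrite /mon mdegD !mdegMn !mdeg1 !mul1n. Qed.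

Variable p : nat.
Local Notation g := (genus p).

Lemma sum_ind (f : 'I_g -> k) (i0 : 'I_g) (b : bool) :
  \sum_(i < g) f i * ((nat_of_ord i == i0) && b)%:R = if b then f i0 else 0.
Proof.
case: b; last by apply: big1 => i _; rewrite andbF mulr0.
rewrite (bigD1 i0) //= eqxx mulr1 big1 ?addr0 // => j hj.
by rewrite andbT val_eqE (negbTE hj) mulr0.
Qed.

Lemma sum_ind0 (f : 'I_g -> k) (n : nat) (b : bool) : (g <= n)%N ->
  \sum_(i < g) f i * ((nat_of_ord i == n) && b)%:R = 0.
Proof.
move=> hn; apply: big1 => i _; case: eqP => [hin|]; last by rewrite mulr0.
by move: (ltn_ord i); rewrite hin ltnNge hn.
Qed.

Lemma sym_ofE (cc : 'rV[k]_g) : sym_of cc = \sum_(i < g) cc 0 i *: 'X_[mon i (g.-1 - i)].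
Proof. by rewrite /sym_of; apply: eq_bigr => i _; rewrite XXmon. Qed.

Lemma mcoeff_sym (cc : 'rV[k]_g) m : (sym_of cc)@_m =
  \sum_(i < g) cc 0 i * ((nat_of_ord i == m ord0) && (g.-1 - m ord0 == m ord_max)%N)%:R.
Proof.
rewrite sym_ofE raddf_sum; apply: eq_bigr => i _.
rewrite /= mcoeffZ mcoeffX mon_eq; congr (_ * (_ %:R)).
by case: eqP => // ->.
Qed.

Lemma sym_homog (cc : 'rV[k]_g) : sym_of cc \is g.-1.-homog.
Proof.
rewrite sym_ofE; apply: rpred_sum => i _; apply: rpredZ.
rewrite dhomogX; change (mdeg (mon i (g.-1 - i)) == g.-1); rewrite mdeg_mon subnKC //.
by rewrite -ltnS prednK ?ltn_ord // (leq_ltn_trans _ (ltn_ord i)).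
Qed.

Lemma sym_inj : injective (@sym_of k p).
Proof.
move=> c1 c2 h; apply/rowP => i.
have := congr1 (mcoeff (mon i (g.-1 - i))) h.
have hi : (i <= g.-1)%N by rewrite -ltnS prednK ?ltn_ord // (leq_ltn_trans _ (ltn_ord i)).
by rewrite !mcoeff_sym mon0 mon1 !sum_ind eqxx.
Qed.

Hypothesis g0 : (0 < g)%N.
Lemma sym_surj (P : {mpoly k[2]}) : P \is g.-1.-homog -> exists cc : 'rV[k]_g, P = sym_of cc.
Proof.
move=> hP; exists (\row_(i < g) P@_(mon i (g.-1 - i))).
apply/mpolyP => m; rewrite mcoeff_sym.
have hm : m = mon (m ord0) (m ord_max) by apply/eqP; rewrite eq_sym mon_eq !eqxx.
have P0 : (m ord0 + m ord_max != g.-1)%N -> P@_m = 0.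
  move=> hne; apply: memN_msupp_eq0; apply/negP => hs.
  move/dhomogP/(_ m hs): (hP); rewrite {1}hm.
  change (mdeg (mon (m ord0) (m ord_max)) = g.-1 -> False).
  by rewrite mdeg_mon => /eqP; rewrite (negbTE hne).
case: (ltnP (m ord0) g) => h0; last first.
  rewrite sum_ind0 // P0 //; apply/negP => /eqP he.
  move: h0 g0 he; lia.
rewrite (sum_ind _ (Ordinal h0)) mxE /=.
case: eqP => [h2|h2]; first by rewrite h2 -hm.
rewrite P0 //; apply/negP => /eqP he; apply: h2; move: he; lia.
Qed.

Variable s : 'M['F_p]_2.
Local Notation a := (@ent k p s 0 0).
Local Notation b := (@ent k p s 0 1).
Local Notation c := (@ent k p s 1 0).
Local Notation d := (@ent k p s 1 1).

Lemma actV_sym (cc : 'rV[k]_g) : actV s (sym_of cc) =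
  \sum_(i < g) cc 0 i *: ((a *: 'X_0 + b *: 'X_1) ^+ i * (c *: 'X_0 + d *: 'X_1) ^+ (g.-1 - i)).
Proof.
rewrite /actV /sym_of raddf_sum; apply: eq_bigr => i _.
rewrite /= comp_mpolyZ rmorphM !rmorphXn /= !comp_mpolyXU. by [].
Qed.

Lemma lin_homog (u v : k) : (u *: 'X_0 + v *: 'X_1 : {mpoly k[2]}) \is 1.-homog.
Proof.
have hX (l : 'I_2) : ('X_l : {mpoly k[2]}) \is 1.-homog.
  by rewrite dhomogX; change (@mdeg 2 U_(l) == 1)%N; rewrite mdeg1.
by apply: rpredD; apply: rpredZ; apply: hX.
Qed.

Lemma actV_homog (cc : 'rV[k]_g) : actV s (sym_of cc) \is g.-1.-homog.
Proof.
rewrite actV_sym; apply: rpred_sum => i _; apply: rpredZ.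
have hi : (i <= g.-1)%N by rewrite -ltnS prednK ?ltn_ord // (leq_ltn_trans _ (ltn_ord i)).
have := dhomogM (dhomogMn i (lin_homog a b)) (dhomogMn (g.-1 - i) (lin_homog c d)).
by rewrite !mul1n subnKC.
Qed.

Definition hdh (l : 'I_2) : {poly k} := if l == ord0 then 'X else 1.
Local Notation dh := (mmap (@polyC k) hdh).

Lemma dhX0 : dh 'X_0 = 'X.
Proof. by rewrite mmapX mmap1U. Qed.
Lemma dhX1 : dh 'X_1 = 1.
Proof. by rewrite mmapX mmap1U. Qed.

Lemma dh_sym (cc : 'rV[k]_g) : dh (sym_of cc) = \sum_(i < g) (cc 0 i)%:P * 'X^i.
Proof.
rewrite /sym_of raddf_sum; apply: eq_bigr => i _.
by rewrite /= mmapZ rmorphM !rmorphXn /= dhX0 dhX1 expr1n mulr1.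
Qed.

Lemma dh_act (cc : 'rV[k]_g) : dh (actV s (sym_of cc)) =
  \sum_(i < g) (cc 0 i)%:P * ((a *: 'X + b%:P) ^+ i * (c *: 'X + d%:P) ^+ (g.-1 - i)).
Proof.
rewrite actV_sym raddf_sum; apply: eq_bigr => i _.
rewrite /= mmapZ rmorphM !rmorphXn !rmorphD /= !mmapZ dhX0 dhX1.
by rewrite !mulr1 !mul_polyC.
Qed.
End MP.

Section Fin.
Variables (k : closedFieldType) (p : nat).
Lemma coefPc (cc : 'rV[k]_(genus p)) (i : 'I_(genus p)) : (Pc k p cc)`_i = cc 0 i.
Proof.
rewrite /Pc coef_sum (bigD1 i) //= coefCM coefXn eqxx mulr1 big1 ?addr0 // => j hj.
by rewrite coefCM coefXn (_ : (nat_of_ord i == j) = false) ?mulr0 //; apply/negbTE; rewrite eq_sym val_eqE.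
Qed.
End Fin.

Theorem proposition2p2 (k : closedFieldType) (p : nat) :
  prime p -> (2 < p)%N -> p \in [pchar k] ->
  [/\ injective (@omega_of k p),
      injective (@sym_of k p),
      (forall c : 'rV[k]_(genus p), @sym_of k p c \is (genus p).-1.-homog),
      (forall P : {mpoly k[2]}, P \is (genus p).-1.-homog ->
         exists c : 'rV[k]_(genus p), P = @sym_of k p c)
    & forall s : 'M['F_p]_2, \det s = 1 ->
      forall c : 'rV[k]_(genus p), exists c' : 'rV[k]_(genus p),
        pullback s (@omega_of k p c) = @omega_of k p c' /\
        @sym_of k p c' = actV s (@sym_of k p c)].
Proof.
move=> pp p2 chp.
have [g0 _ _] := g_facts k p pp chp p2.
split.
- move=> c1 c2 h.
  have := congr1 snd h; rewrite !omega_of2 => /(mulIf (invr_neq0 (fF_neq0 k p pp))).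
  move/eqP; rewrite tofrac_eq => /eqP hP.
  apply/rowP => i; have := congr1 (fun q : {poly k} => q`_i) hP.
  by rewrite /= !coefPc.
- exact: sym_inj.
- exact: sym_homog.
- exact: sym_surj k p g0.
move=> s hs cc.
have [c' hc'] := sym_surj k p g0 _ (actV_homog k p g0 s cc).
exists c'; split; last by [].
apply: (pull_main k p pp chp s hs p2).
have := congr1 (mmap (@polyC k) (hdh k)) hc'.
by rewrite dh_sym dh_act.
Qed.
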